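(* Let $k\ge 2$ be a fixed integer. For $n\ge 1$, let $X_n$ be the random variable counting the number of occurrences of the pattern $12\cdots k$ in a permutation $p=p_1p_2\cdots p_n$ chosen uniformly at random among all $n!$ permutations of length $n$, i.e. the number of index sets $1\le i_1<i_2<\cdots<i_k\le n$ with $p_{i_1}<p_{i_2}<\cdots<p_{i_k}$. Then there exists a constant $c>0$ (depending only on $k$) such that for all $n\ge k$, \[\operatorname{Var}(X_n)\ge c\, n^{2k-1}.\]
   Context: A permutation of length $n$ is chosen uniformly at random, each with probability $1/n!$. *)

(* Defs.v *)
From HB Require Import structures.
From mathcomp Require Import all_boot all_order all_algebra all_fingroup.
Set Implicit Arguments. Unset Strict Implicit. Unset Printing Implicit Defensive.
Import Order.TTheory GRing.Theory Num.Theory.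

Definition occ (k n : nat) (p : 'S_n) : nat :=
  #|[set A : {set 'I_n} | (#|A| == k) &&
     [forall i in A, forall j in A, (i < j)%N ==> (p i < p j)%N]]|.

Definition Eunif (n : nat) (f : 'S_n -> rat) : rat :=
  ((\sum_(p : 'S_n) f p) / (n`!)%:R)%R.

Definition Xn (k n : nat) (p : 'S_n) : rat := ((occ k p)%:R)%R.

Definition VarX (k n : nat) : rat :=
  Eunif (fun p : 'S_n => (Xn k p - Eunif (Xn k (n:=n))) ^+ 2)%R.

(* Main.v *)
Require Import Defs.
From HB Require Import structures.
From mathcomp Require Import all_boot all_order all_algebra all_fingroup.
Import Order.TTheory GRing.Theory Num.Theory.
From mathcomp Require Import zify ring lra.
Set Implicit Arguments. Unset Strict Implicit. Unset Printing Implicit Defensive.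

Section Slot.
Variable n : nat.
Implicit Types (A : {set 'I_n}) (q : 'S_n).

Definition incr A q := [forall i in A, forall j in A, (i < j)%N ==> (q i < q j)%N].

Lemma incrP A q : reflect (forall i j, i \in A -> j \in A -> (i < j)%N -> (q i < q j)%N) (incr A q).
Proof.
apply: (iffP forall_inP) => [H i j iA jA ij|H i iA].
  by have /forall_inP/(_ j jA)/implyP := H i iA; apply.
by apply/forall_inP => j jA; apply/implyP; apply: H.
Qed.

Lemma perm_val_neq q (x y : 'I_n) : x != y -> (q x : nat) != q y.
Proof. by move=> xy; apply: contra xy => /eqP/val_inj/perm_inj ->. Qed.

Variables (A : {set 'I_n}) (u : 'I_n).
Hypothesis uA : u \notin A.

Definition T q := #|[set b in A | (q b < q u)%N]|.
Definition L (b : 'I_n) := #|[set b' in A | (b' < b)%N]|.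

Lemma neq_u b : b \in A -> b != u.
Proof. by move=> bA; apply: contraNneq uA => <-. Qed.

Lemma LE b : b \in A -> #|[set b' in A | (b' <= b)%N]| = (L b).+1.
Proof.
move=> bA; rewrite /L.
have -> : [set b' in A | (b' <= b)%N] = b |: [set b' in A | (b' < b)%N].
  apply/setP => x; rewrite !inE leq_eqVlt.
  have -> : (nat_of_ord x == b) = (x == b) by [].
  by case: (eqVneq x b) => [->|] //=; rewrite ?bA ?ltnn ?andbT ?orbF.
by rewrite cardsU1 inE ltnn andbF.
Qed.

Lemma T_le q : T q <= #|A|.
Proof. by apply: subset_leq_card; apply/subsetP => x; rewrite inE => /andP[]. Qed.

Lemma L_lt b : b \in A -> L b < #|A|.
Proof.
move=> bA; rewrite -LE //; apply: subset_leq_card; apply/subsetP => x.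
by rewrite inE => /andP[].
Qed.

Lemma L_mono b b' : b \in A -> b' \in A -> (b' < b)%N -> L b' < L b.
Proof.
move=> bA b'A lt; rewrite -LE //; apply: subset_leq_card; apply/subsetP => x.
rewrite !inE => /andP[-> /= xb]; exact: leq_ltn_trans xb lt.
Qed.

Lemma c1 b q : b \in A -> incr A q -> (q u < q b)%N -> T q <= L b.
Proof.
move=> bA /incrP Iq ub; apply: subset_leq_card; apply/subsetP => x.
rewrite !inE => /andP[xA xu]; rewrite xA /=.
rewrite ltnNge; apply/negP; rewrite leq_eqVlt => /orP[/eqP/val_inj bx|bx].
  by move: xu; rewrite -bx => /(ltn_trans ub); rewrite ltnn.
by have := Iq _ _ bA xA bx => /(ltn_trans ub)/(ltn_trans xu); rewrite ltnn.
Qed.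

Lemma c2 b q : b \in A -> incr A q -> (q b < q u)%N -> L b < T q.
Proof.
move=> bA /incrP Iq bu; rewrite -LE //; apply: subset_leq_card; apply/subsetP => x.
rewrite !inE => /andP[xA]; rewrite xA /= leq_eqVlt => /orP[/eqP/val_inj -> //|xb].
exact: ltn_trans (Iq _ _ xA bA xb) bu.
Qed.

Lemma cmp_ub b q : b \in A -> (q u < q b)%N = ~~ (q b < q u)%N.
Proof.
move=> bA; have := perm_val_neq q (neq_u bA); rewrite neq_ltn.
by case/orP=> h; rewrite h ?(ltnW h) // ltnNge (ltnW h).
Qed.

Lemma ub_T b q : b \in A -> incr A q -> (q u < q b)%N = (T q <= L b).
Proof.
move=> bA Iq; apply/idP/idP; first exact: c1.
rewrite cmp_ub //; apply: contraL => h; rewrite -ltnNge; exact: c2.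
Qed.

Definition P1 b q := incr A q && (q u < q b)%N &&
  [forall b' in A, (b' < b)%N ==> (q b' < q u)%N].
Definition P2 b q := incr A q && (q b < q u)%N &&
  [forall b' in A, (b < b')%N ==> (q u < q b')%N].

Lemma P1E b q : b \in A -> P1 b q = incr A q && (T q == L b).
Proof.
move=> bA; rewrite /P1; case Iq: (incr A q) => //=.
apply/idP/idP.
  case/andP=> ub /forall_inP H; rewrite eqn_leq c1 //=.
  apply: subset_leq_card; apply/subsetP => x; rewrite !inE => /andP[xA xb].
  by rewrite xA; have /implyP := H x xA; apply.
move/eqP=> TL; have ub : (q u < q b)%N by rewrite ub_T // TL.
rewrite ub /=; apply/forall_inP => x xA; apply/implyP => xb.
rewrite -[_ < _]negbK -cmp_ub //; apply/negP => ux.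
have := L_mono bA xA xb; rewrite -TL ltnNge; move/negP; apply.
by rewrite -ub_T.
Qed.

Lemma P2E b q : b \in A -> P2 b q = incr A q && (T q == (L b).+1).
Proof.
move=> bA; rewrite /P2; case Iq: (incr A q) => //=.
apply/idP/idP.
  case/andP=> bu /forall_inP H; rewrite eqn_leq c2 // andbT -LE //.
  apply: subset_leq_card; apply/subsetP => x; rewrite !inE => /andP[xA xu].
  rewrite xA /= leqNgt; apply/negP => bx.
  have /implyP := H x xA => /(_ bx) ux.
  by have := ltn_trans xu ux; rewrite ltnn.
move/eqP=> TL; have bu : (q b < q u)%N.
  by rewrite -[(_ < _)%N]negbK -cmp_ub // ub_T // TL ltnn.
rewrite bu /=; apply/forall_inP => x xA; apply/implyP => bx.
rewrite cmp_ub //; apply/negP => xu.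
have := c2 xA Iq xu; rewrite TL ltnS leqNgt; move/negP; apply.
exact: L_mono.
Qed.

Lemma swapP b q : b \in A -> P2 b (tperm u b * q) = P1 b q.
Proof.
move=> bA; set q' := (tperm u b * q)%g.
have qb : q' b = q u by rewrite /q' permM tpermR.
have qu : q' u = q b by rewrite /q' permM tpermL.
have qx x : x \in A -> x != b -> q' x = q x.
  move=> xA xb; rewrite /q' permM tpermD //; first by rewrite eq_sym neq_u.
  by rewrite eq_sym.
rewrite /P1 /P2 qb qu.
apply/idP/idP.
  case/andP=> /andP[/incrP I' ub] /forall_inP H'.
  have H x : x \in A -> (b < x)%N -> (q b < q x)%N.
    move=> xA bx; have xnb : x != b by apply: contraTneq bx => ->; rewrite ltnn.
    by have /implyP := H' x xA; rewrite qx //; apply.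
  rewrite ub andbT; apply/andP; split.
    apply/incrP => i j iA jA ij.
    case: (eqVneq i b) => [ib|ib]; first by subst i; exact: H.
    case: (eqVneq j b) => [jb|jb].
      subst j; have := I' _ _ iA bA ij; rewrite qx // qb => h.
      exact: ltn_trans h ub.
    by have := I' _ _ iA jA ij; rewrite !qx.
  apply/forall_inP => x xA; apply/implyP => xb.
  have xnb : x != b by apply: contraTneq xb => ->; rewrite ltnn.
  by have := I' _ _ xA bA xb; rewrite qx // qb.
case/andP=> /andP[/incrP I ub] /forall_inP H.
apply/andP; split; last first.
  apply/forall_inP => x xA; apply/implyP => bx.
  have xnb : x != b by apply: contraTneq bx => ->; rewrite ltnn.
  by rewrite qx //; apply: I.
rewrite ub andbT; apply/incrP => i j iA jA ij.
case: (eqVneq i b) => [ib|ib].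
  subst i; have jb : j != b by apply: contraTneq ij => ->; rewrite ltnn.
  rewrite qb qx //; exact: ltn_trans ub (I _ _ bA jA ij).
case: (eqVneq j b) => [jb|jb].
  by subst j; rewrite qb qx //; have /implyP := H i iA; apply.
by rewrite !qx //; apply: I.
Qed.

Definition Nz z := \sum_(q : 'S_n) (incr A q && (T q == z)).

Lemma Nz_step b : b \in A -> Nz (L b) = Nz (L b).+1.
Proof.
move=> bA; rewrite /Nz.
rewrite (eq_bigr (fun q => nat_of_bool (P1 b q))); last by move=> q _; rewrite P1E.
rewrite [RHS](eq_bigr (fun q => nat_of_bool (P2 b q))); last by move=> q _; rewrite P2E.
rewrite [RHS](reindex_inj (mulgI (tperm u b))) /=.
by apply: eq_bigr => q _; rewrite swapP.
Qed.

Lemma L_surj z : z < #|A| -> exists2 b, b \in A & L b = z.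
Proof.
move=> zA.
have U : uniq [seq L b | b <- enum A].
  rewrite map_inj_in_uniq ?enum_uniq // => x y; rewrite !mem_enum => xA yA Lxy.
  apply: val_inj; case: (ltngtP x y) => // h.
    by have := L_mono yA xA h; rewrite Lxy ltnn.
  by have := L_mono xA yA h; rewrite Lxy ltnn.
have S : {subset [seq L b | b <- enum A] <= iota 0 #|A|}.
  move=> x /mapP[b]; rewrite mem_enum => bA ->; rewrite mem_iota /=.
  exact: L_lt.
have Sz : size (iota 0 #|A|) <= size [seq L b | b <- enum A].
  by rewrite size_map size_iota -cardE.
have [_ E] := uniq_min_size U S Sz.
have : z \in iota 0 #|A| by rewrite mem_iota.
by rewrite -E => /mapP[b]; rewrite mem_enum => bA ->; exists b.
Qed.

Lemma Nz_const z : z <= #|A| -> Nz z = Nz 0.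
Proof.
elim: z => // z IH zA; rewrite -IH ?(ltnW zA) //.
have [b bA <-] := L_surj zA; by rewrite Nz_step.
Qed.

Lemma sum_eq_le (x j : nat) : \sum_(z < j.+1) (x == z) = (x <= j).
Proof.
elim: j => [|j IH]; first by rewrite big_ord_recr big_ord0 /= leqn0.
rewrite big_ord_recr /= IH [x <= j.+1]leq_eqVlt ltnS.
case: (eqVneq x j.+1) => [->|h]; first by rewrite ltnn.
by rewrite addn0.
Qed.

Lemma sum_Tle j : j <= #|A| ->
  \sum_(q : 'S_n) (incr A q && (T q <= j)) = j.+1 * Nz 0.
Proof.
move=> jA.
transitivity (\sum_(z < j.+1) Nz z).
  rewrite /Nz exchange_big /=; apply: eq_bigr => q _.
  case: (incr A q) => /=; last by rewrite big1.
  by rewrite sum_eq_le.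
rewrite (eq_bigr (fun _ => Nz 0)); first by rewrite sum_nat_const card_ord.
move=> z _; apply: Nz_const; have := ltn_ord z; lia.
Qed.

Lemma NI_Nz : \sum_(q : 'S_n) incr A q = (#|A|).+1 * Nz 0.
Proof.
rewrite -sum_Tle //; apply: eq_bigr => q _; by rewrite T_le andbT.
Qed.

Lemma E_ub b : b \in A ->
  \sum_(q : 'S_n) (incr A q && (q u < q b)%N) = (L b).+1 * Nz 0.
Proof.
move=> bA; rewrite -sum_Tle; last exact: ltnW (L_lt bA).
apply: eq_bigr => q _; case Iq: (incr A q) => //=; by rewrite ub_T.
Qed.

Lemma E_bu b : b \in A ->
  \sum_(q : 'S_n) (incr A q && (q b < q u)%N) = (#|A| - L b) * Nz 0.
Proof.
move=> bA.
have : \sum_(q : 'S_n) (incr A q && (q u < q b)%N) +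
       \sum_(q : 'S_n) (incr A q && (q b < q u)%N) = (#|A|).+1 * Nz 0.
  rewrite -NI_Nz -big_split /=; apply: eq_bigr => q _.
  rewrite (cmp_ub q bA); by case: (incr A q); case: (q b < q u)%N.
rewrite E_ub // => h; apply/eqP; rewrite -(eqn_add2l ((L b).+1 * Nz 0)) h.
rewrite -mulnDl; apply/eqP; congr (_ * _).
have := L_lt bA; lia.
Qed.
End Slot.

Section Fact.
Variable n : nat.
Implicit Types (A : {set 'I_n}) (q : 'S_n).

Lemma incr_max A u q : u \in A -> (forall b, b \in A -> (b <= u)%N) ->
  incr A q = incr (A :\ u) q && (T (A :\ u) u q == #|A :\ u|).
Proof.
move=> uA umax.
have allb : (forall b, b \in A :\ u -> (q b < q u)%N) <-> (T (A :\ u) u q == #|A :\ u|).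
  split.
    move=> H; rewrite /T (_ : [set b in A :\ u | (q b < q u)%N] = A :\ u) //.
    apply/setP => x; rewrite inE.
    by case xA: (x \in A :\ u) => //=; apply: H.
  move=> /eqP H b bA'.
  have : [set b0 in A :\ u | (q b0 < q u)%N] == A :\ u.
    by rewrite eqEcard -/(T (A :\ u) u q) H leqnn andbT; apply/subsetP => x; rewrite inE => /andP[].
  move/eqP => E; have : b \in [set b0 in A :\ u | (q b0 < q u)%N] by rewrite E.
  by rewrite inE => /andP[].
apply/idP/idP.
  move/incrP=> I; apply/andP; split.
    by apply/incrP => i j; rewrite !inE => /andP[_ iA] /andP[_ jA]; apply: I.
  apply/allb => b; rewrite !inE => /andP[bu bA]; apply: I => //.
  by rewrite ltn_neqAle umax // andbT.
case/andP=> /incrP I /allb H; apply/incrP => i j iA jA ij.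
case: (eqVneq j u) => [ju|ju].
  subst j; apply: H; rewrite !inE iA andbT.
  by apply: contraTneq ij => ->; rewrite ltnn.
case: (eqVneq i u) => [iu|iu].
  by subst i; have := umax _ jA; rewrite leqNgt ij.
by apply: I => //; rewrite !inE ?iA ?jA ?iu ?ju.
Qed.

Lemma NI_fact A : (\sum_(q : 'S_n) incr A q) * (#|A|)`! = n`!.
Proof.
move Ak: #|A| => k; elim: k A Ak => [|k IH] A Ak.
  have -> : A = set0 by apply/eqP; rewrite -cards_eq0 Ak.
  rewrite muln1 -card_Sn -sum1_card; apply: eq_bigr => q _.
  by apply/eqP; rewrite eqb1; apply/incrP => i j; rewrite inE.
have [x0 x0A] : exists x0, x0 \in A.
  by apply/set0Pn; rewrite -cards_eq0 Ak.
case: (@arg_maxnP _ x0 (mem A) val x0A) => u uA umax.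
have {}uA : u \in A by [].
have {}umax : forall b, b \in A -> (b <= u)%N by move=> b bA; apply: umax.
set A' := A :\ u.
have uA' : u \notin A' by rewrite !inE eqxx.
have cA' : #|A'| = k by have := cardsD1 u A; rewrite uA Ak add1n => -[].
have -> : \sum_(q : 'S_n) incr A q = Nz A' u #|A'|.
  by apply: eq_bigr => q _; rewrite (incr_max q uA umax).
rewrite Nz_const // factS mulnA mulnAC -cA'.
rewrite -(IH A' cA') (NI_Nz uA') cA'; ring.
Qed.
End Fact.

Section Sign.
Variable n : nat.
Local Notation m := (n./2).

Lemma m2n : m + m <= n.
Proof. have := odd_double_half n; rewrite -addnn; lia. Qed.

Lemma m_le : m <= n.
Proof. have := m2n; lia. Qed.

Lemma lr_lt (i : 'I_m) : i + m < n.
Proof. have := m2n; have := ltn_ord i; lia. Qed.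

Definition lft (i : 'I_m) : 'I_n := widen_ord m_le i.
Definition rgt (i : 'I_m) : 'I_n := Ordinal (lr_lt i).

Arguments lft : simpl never.
Arguments rgt : simpl never.
Lemma lftE i : (lft i : nat) = i. Proof. by []. Qed.
Lemma rgtE i : (rgt i : nat) = i + m. Proof. by []. Qed.

Lemma lr_neq i j : lft i != rgt j.
Proof. apply/eqP => /(congr1 val); rewrite /= ; have := ltn_ord i; lia. Qed.

Lemma lr_lt' i : (lft i < rgt i)%N.
Proof. rewrite /=; have := ltn_ord i; lia. Qed.

Local Open Scope ring_scope.

Definition sg (i : 'I_m) (q : 'S_n) : rat := if (q (lft i) < q (rgt i))%N then 1 else -1.

Lemma sg_swap i q : sg i (tperm (lft i) (rgt i) * q)%g = - sg i q.
Proof.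
rewrite /sg !permM tpermL tpermR.
have := perm_val_neq q (lr_neq i i); rewrite neq_ltn.
by case/orP => h; rewrite h ?ltnNge ?(ltnW h) ?opprK.
Qed.

Lemma sg_other i j q : i != j -> sg j (tperm (lft i) (rgt i) * q)%g = sg j q.
Proof.
move=> ij; have ij' : (i : nat) != j by [].
rewrite /sg !permM !tpermD //.
all: apply/eqP => /(congr1 val) /= h; move: ij'; have := ltn_ord i; have := ltn_ord j; lia.
Qed.

Lemma sum_sg i : \sum_(q : 'S_n) sg i q = 0.
Proof.
set S := \sum_q _.
have : S = - S.
  rewrite {1}/S (reindex_inj (mulgI (tperm (lft i) (rgt i)))) /= -sumrN.
  by apply: eq_bigr => q _; rewrite sg_swap.
lra.
Qed.

Lemma sg2 i q : sg i q * sg i q = 1.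
Proof. by rewrite /sg; case: ifP => _; rewrite ?mulr1 ?mulrNN ?mulr1. Qed.

Lemma sum_sg2 i j : \sum_(q : 'S_n) sg i q * sg j q = if i == j then (n`!)%:R else 0.
Proof.
case: (eqVneq i j) => [<-|ij].
  rewrite (eq_bigr (fun _ => 1)); last by move=> q _; rewrite sg2.
  by rewrite sumr_const card_Sn.
set S := \sum_q _.
have : S = - S.
  rewrite {1}/S (reindex_inj (mulgI (tperm (lft i) (rgt i)))) /= -sumrN.
  by apply: eq_bigr => q _; rewrite sg_swap sg_other // mulNr.
lra.
Qed.

Definition Y (q : 'S_n) : rat := \sum_(i < m) sg i q.

Lemma sum_Y : \sum_(q : 'S_n) Y q = 0.
Proof. rewrite /Y exchange_big /=; apply: big1 => i _; exact: sum_sg. Qed.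

Lemma sum_Y2 : \sum_(q : 'S_n) Y q ^+ 2 = m%:R * (n`!)%:R.
Proof.
rewrite (eq_bigr (fun q => \sum_(i < m) \sum_(j < m) sg i q * sg j q)); last first.
  move=> q _; rewrite /Y expr2 mulr_suml; apply: eq_bigr => i _; by rewrite mulr_sumr.
rewrite exchange_big /=.
rewrite (eq_bigr (fun _ => (n`!)%:R)); first by rewrite sumr_const card_ord mulr_natl.
move=> i _; rewrite exchange_big /=.
rewrite (bigD1 i) //= sum_sg2 eqxx big1 ?addr0 // => j ji.
by rewrite sum_sg2 eq_sym (negbTE ji).
Qed.
End Sign.

Section Count.
Variable n : nat.

Lemma count_sets (P Q : {set 'I_n}) k : [disjoint P & Q] -> #|P| <= k ->
  #|[set A : {set 'I_n} | (#|A| == k) && (P \subset A) && [disjoint A & Q]]|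
  = 'C(n - #|P| - #|Q|, k - #|P|).
Proof.
move=> PQ Pk.
set D := ~: (P :|: Q).
have cD : #|D| = n - #|P| - #|Q|.
  have := cardsC (P :|: Q); rewrite card_ord -/D cardsU.
  have -> : P :&: Q = set0 by apply/eqP; rewrite setI_eq0.
  rewrite cards0 subn0; have := subset_leq_card (subsetT (P :|: Q)).
  rewrite cardsT card_ord cardsU; move: PQ; rewrite -setI_eq0 => /eqP ->.
  rewrite cards0 subn0; lia.
rewrite -cD -cards_draws.
set Dom := [set B : {set 'I_n} | (B \subset D) && (#|B| == k - #|P|)].
have injf : {in Dom &, injective (fun B => B :|: P)}.
  move=> B1 B2; rewrite !inE => /andP[B1D _] /andP[B2D _] E.
  have H (B : {set 'I_n}) : B \subset D -> (B :|: P) :\: P = B.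
    move=> BD; rewrite setDUl setDv setU0; apply/setDidPl.
    rewrite disjoints_subset; apply: subset_trans BD _.
    by rewrite setCS subsetUl.
  by rewrite -(H _ B1D) E H.
rewrite -(card_in_imset injf); apply: eq_card => A; rewrite !inE.
apply/idP/idP.
  case/andP=> /andP[/eqP Ak PA] AQ.
  apply/imsetP; exists (A :\: P); last first.
    apply/setP => x; rewrite !inE; case xP: (x \in P) => /=; last by rewrite orbF.
    by rewrite (subsetP PA x xP).
  rewrite inE; apply/andP; split.
    apply/subsetP => x; rewrite !inE => /andP[xP xA]; rewrite negb_or xP /=.
    by rewrite (disjointFr AQ xA).
  by rewrite cardsD (setIidPr PA) Ak.
case/imsetP => B; rewrite inE => /andP[BD /eqP Bk] ->.
have BP : [disjoint B & P].
  rewrite disjoints_subset; apply: subset_trans BD _; by rewrite setCS subsetUl.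
have BQ : [disjoint B & Q].
  rewrite disjoints_subset; apply: subset_trans BD _; by rewrite setCS subsetUr.
rewrite subsetUr andbT cardsU.
move: BP; rewrite -setI_eq0 => /eqP ->; rewrite cards0 subn0 Bk subnK //=.
rewrite eqxx /= -setI_eq0 setIUl; move: BQ PQ; rewrite -!setI_eq0 => /eqP-> /eqP->.
by rewrite setU0.
Qed.


Lemma cnt1N k (x y z : 'I_n) : 2 <= k -> x != y -> x != z -> y != z ->
  #|[pred A : {set 'I_n} | (#|A| == k) && ((x \in A) && (z \notin A) && (y \in A))]|
  = 'C(n - 3, k - 2).
Proof.
move=> hk xy xz yz.
have -> : #|[pred A : {set 'I_n} | (#|A| == k) && ((x \in A) && (z \notin A) && (y \in A))]|
  = #|[set A : {set 'I_n} | (#|A| == k) && ([set x; y] \subset A) && [disjoint A & [set z]]]|.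
  apply: eq_card => A; rewrite !inE subUset !sub1set disjoint_sym disjoints1.
  by case: (x \in A); case: (y \in A); case: (z \in A); rewrite /= ?andbF ?andbT.
have D : [disjoint [set x; y] & [set z]].
  by rewrite disjoint_sym disjoints1 !inE negb_or ![z == _]eq_sym xz yz.
have c2 : #|[set x; y]| = 2 by rewrite cards2 xy.
have c1 : #|[set z]| = 1 by rewrite cards1.
have := count_sets D (k := k); rewrite c2 c1 => /(_ hk) E.
by rewrite -subnDA in E; exact: E.
Qed.

Lemma cnt2N k (x y : 'I_n) : 2 <= k -> x != y ->
  #|[pred A : {set 'I_n} | (#|A| == k) && ((x \in A) && (y \in A))]| = 'C(n - 2, k - 2).
Proof.
move=> hk xy.
have -> : #|[pred A : {set 'I_n} | (#|A| == k) && ((x \in A) && (y \in A))]|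
  = #|[set A : {set 'I_n} | (#|A| == k) && ([set x; y] \subset A) && [disjoint A & set0]]|.
  apply: eq_card => A; rewrite !inE subUset !sub1set.
  have -> : [disjoint A & set0] by rewrite -setI_eq0 setI0.
  by rewrite andbT.
have D : [disjoint [set x; y] & set0] by rewrite -setI_eq0 setI0.
have c2 : #|[set x; y]| = 2 by rewrite cards2 xy.
have := count_sets D (k := k); rewrite c2 cards0 subn0 => /(_ hk) E.
exact: E.
Qed.
End Count.

Section PerA.
Variable n : nat.
Local Notation m := (n./2).
Local Open Scope ring_scope.

Lemma sum_sgn (A : {set 'I_n}) (c : pred 'S_n) :
  \sum_(q : 'S_n) (incr A q)%:R * (if c q then 1 else -1 : rat) =
  (\sum_(q : 'S_n) (incr A q && c q) : nat)%:R - (\sum_(q : 'S_n) (incr A q && ~~ c q) : nat)%:R.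
Proof.
rewrite !natr_sum -sumrB; apply: eq_bigr => q _.
by case: (incr A q); case: (c q); rewrite /= ?mulr1 ?mulrN1 ?subr0 ?sub0r ?mul0r ?subrr.
Qed.

Lemma incr_swap (A : {set 'I_n}) x y q : x \notin A -> y \notin A ->
  incr A (tperm x y * q)%g = incr A q.
Proof.
move=> xA yA.
have E z : z \in A -> (tperm x y * q)%g z = q z.
  move=> zA; rewrite permM tpermD //.
    by apply: contraNneq xA => ->.
  by apply: contraNneq yA => ->.
apply/incrP/incrP => H i j iA jA ij; have := H i j iA jA ij; by rewrite !E.
Qed.

Lemma h_none i (A : {set 'I_n}) : lft i \notin A -> rgt i \notin A ->
  \sum_(q : 'S_n) (incr A q)%:R * sg i q = 0.
Proof.
move=> lA rA; set S := \sum_q _.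
have : S = - S.
  rewrite {1}/S (reindex_inj (mulgI (tperm (lft i) (rgt i)))) /= -sumrN.
  by apply: eq_bigr => q _; rewrite sg_swap incr_swap // mulrN.
lra.
Qed.

Lemma h_both i (A : {set 'I_n}) : lft i \in A -> rgt i \in A ->
  \sum_(q : 'S_n) (incr A q)%:R * sg i q = (\sum_(q : 'S_n) incr A q : nat)%:R.
Proof.
move=> lA rA; rewrite natr_sum; apply: eq_bigr => q _.
case Iq: (incr A q); rewrite ?mul0r //= mul1r /sg.
by move/incrP: Iq => I; rewrite I // lr_lt'.
Qed.

Lemma h_l i (A : {set 'I_n}) : lft i \in A -> rgt i \notin A ->
  \sum_(q : 'S_n) (incr A q)%:R * sg i q =
  ((#|A| - L A (lft i))%:R - ((L A (lft i)).+1)%:R) * (Nz A (rgt i) 0)%:R.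
Proof.
move=> lA rA; rewrite /sg sum_sgn (E_bu rA lA).
under eq_bigr => q _ do rewrite -(cmp_ub rA q lA).
by rewrite (E_ub rA lA) !natrM mulrBl.
Qed.

Lemma h_r i (A : {set 'I_n}) : rgt i \in A -> lft i \notin A ->
  \sum_(q : 'S_n) (incr A q)%:R * sg i q =
  (((L A (rgt i)).+1)%:R - (#|A| - L A (rgt i))%:R) * (Nz A (lft i) 0)%:R.
Proof.
move=> rA lA; rewrite /sg sum_sgn (E_ub lA rA).
under eq_bigr => q _ do rewrite (cmp_ub lA q rA) negbK.
by rewrite (E_bu lA rA) !natrM mulrBl.
Qed.


Definition Rc (A : {set 'I_n}) (b : 'I_n) := #|[set b' in A | (b < b')%N]|.

Lemma card_sum (p : {pred 'I_n}) : #|p| = (\sum_(x : 'I_n) (x \in p))%N.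
Proof. by rewrite -sum1_card big_mkcond /=; apply: eq_bigr => x _; case: (x \in p). Qed.

Lemma card_split (A : {set 'I_n}) b : b \in A -> #|A| = (L A b + Rc A b).+1.
Proof.
move=> bA; rewrite /L /Rc !card_sum -big_split /=.
rewrite (bigD1 b) //= [X in _ = X.+1](bigD1 b) //= !inE ltnn bA /= add0n add1n.
congr _.+1; apply: eq_bigr => x xb; rewrite !inE.
have : (x : nat) != b by [].
by rewrite neq_ltn; case: (x \in A) => //=; case/orP=> h; rewrite h ?(ltn_geF (ltnW h)) ?ltnNge ?(ltnW h).
Qed.

Definition w1 (x y : 'I_n) : rat := ((x < y)%N)%:R - ((y < x)%N)%:R.

Lemma RL_sum (A : {set 'I_n}) l :
  (Rc A l)%:R - (L A l)%:R = \sum_(b : 'I_n) (b \in A)%:R * w1 l b.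
Proof.
rewrite /Rc /L !card_sum !natr_sum -sumrB; apply: eq_bigr => b _.
by rewrite !inE /w1; case: (b \in A); rewrite /= ?mul1r ?mul0r ?subrr.
Qed.

Lemma LR_sum (A : {set 'I_n}) r :
  (L A r)%:R - (Rc A r)%:R = \sum_(b : 'I_n) (b \in A)%:R * w1 b r.
Proof.
rewrite /Rc /L !card_sum !natr_sum -sumrB; apply: eq_bigr => b _.
by rewrite !inE /w1; case: (b \in A); rewrite /= ?mul1r ?mul0r ?subrr.
Qed.

Variable k : nat.
Definition rho : rat := (n`!)%:R / ((k.+1)`!)%:R.

Lemma Nz0E (A : {set 'I_n}) u : u \notin A -> #|A| = k -> (Nz A u 0)%:R = rho.
Proof.
move=> uA Ak; have := NI_fact A; rewrite (NI_Nz uA) Ak => h.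
rewrite /rho -h factS (_ : (k.+1 * Nz A u 0 * k`! = Nz A u 0 * (k.+1 * k`!))%N); last by ring.
by rewrite natrM mulfK // pnatr_eq0 -lt0n muln_gt0 fact_gt0.
Qed.

Lemma NIE (A : {set 'I_n}) : #|A| = k ->
  (\sum_(q : 'S_n) incr A q : nat)%:R = (k.+1)%:R * rho.
Proof.
move=> Ak; have := NI_fact A; rewrite Ak => h.
rewrite /rho -h factS !natrM; field.
by rewrite pnatr_eq0 -lt0n fact_gt0 -(natrD _ 1 k) pnatr_eq0.
Qed.

Definition G (i : 'I_m) (A : {set 'I_n}) : rat :=
  \sum_(b : 'I_n) ((((lft i \in A) && (rgt i \notin A) && (b \in A)))%:R * w1 (lft i) b
     + (((rgt i \in A) && (lft i \notin A) && (b \in A)))%:R * w1 b (rgt i))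
  + ((lft i \in A) && (rgt i \in A))%:R * (k.+1)%:R.

Lemma h_G i (A : {set 'I_n}) : #|A| = k ->
  \sum_(q : 'S_n) (incr A q)%:R * sg i q = G i A * rho.
Proof.
move=> Ak; rewrite /G.
case lA: (lft i \in A); case rA: (rgt i \in A) => /=; rewrite ?mulr0n ?mulr1n ?mul0r ?mul1r.
- rewrite [\sum_(b < n) _]big1 ?add0r ?mul1r; last by move=> b _; rewrite !mul0r addr0.
  by rewrite h_both // NIE.
- rewrite addr0 (h_l lA (negbT rA)) (Nz0E (negbT rA) Ak).
  congr (_ * _); under eq_bigr => b _ do rewrite mul0r addr0.
  rewrite -RL_sum Ak; have := card_split lA; rewrite Ak => ->.
  set a := L A _; set c := Rc A _.
  rewrite (_ : ((a + c).+1 - a = c + 1)%N); last lia.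
  rewrite -[a.+1]addn1 !natrD; lra.
- rewrite addr0 (h_r rA (negbT lA)) (Nz0E (negbT lA) Ak).
  congr (_ * _); under eq_bigr => b _ do rewrite mul0r add0r.
  rewrite -LR_sum Ak; have := card_split rA; rewrite Ak => ->.
  set a := L A _; set c := Rc A _.
  rewrite (_ : ((a + c).+1 - a = c + 1)%N); last lia.
  rewrite -[a.+1]addn1 !natrD; lra.
- rewrite h_none ?lA ?rA // big1 ?mul0r ?addr0 //.
  by move=> b _; rewrite !mul0r addr0.
Qed.


Lemma sum_card (P b : pred {set 'I_n}) :
  \sum_(A | P A) ((b A)%:R : rat) = (#|[pred A | P A && b A]|)%:R.
Proof.
rewrite -sum1_card natr_sum big_mkcondr /=.
by apply: eq_bigr => A _; case: (b A).
Qed.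

Hypothesis hk : (2 <= k)%N.

Lemma cnt1 x y z : x != y -> x != z -> y != z ->
  \sum_(A : {set 'I_n} | #|A| == k) ((((x \in A) && (z \notin A) && (y \in A)))%:R : rat)
  = ('C(n - 3, k - 2))%:R.
Proof. by move=> xy xz yz; rewrite sum_card cnt1N. Qed.

Lemma cnt2 x y : x != y ->
  \sum_(A : {set 'I_n} | #|A| == k) (((x \in A) && (y \in A))%:R : rat) = ('C(n - 2, k - 2))%:R.
Proof. by move=> xy; rewrite sum_card cnt2N. Qed.

Definition btw (i : 'I_m) (b : 'I_n) : bool := (lft i < b)%N && (b < rgt i)%N.

Lemma sumG i : \sum_(A : {set 'I_n} | #|A| == k) G i A =
  \sum_(b : 'I_n) (2 * 'C(n - 3, k - 2))%:R * (btw i b)%:R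
  + (k.+1 * 'C(n - 2, k - 2))%:R.
Proof.
rewrite /G big_split /=; congr (_ + _); last first.
  by rewrite -mulr_suml cnt2 ?lr_neq // natrM mulrC.
rewrite exchange_big /=; apply: eq_bigr => b _.
rewrite big_split /= -!mulr_suml.
set l := lft i; set r := rgt i.
have lr : (l < r)%N := lr_lt' i.
case: (eqVneq b l) => [->|bl].
  rewrite [X in _ + X * _]big1; last first.
    by move=> A _; case: (l \in A); rewrite /= ?andbF.
  have -> : btw i l = false by rewrite /btw ltnn.
  by rewrite /w1 ltnn !mulr0 mul0r addr0.
case: (eqVneq b r) => [->|br].
  rewrite [X in X * _ + _]big1; last first.
    by move=> A _; case: (r \in A); rewrite /= ?andbF.
  have -> : btw i r = false by rewrite /btw ltnn andbF.
  by rewrite /w1 ltnn subrr !mulr0 mul0r add0r.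
have lb : l != b by rewrite eq_sym.
have lrn : l != r := lr_neq i i.
have rb : r != b by rewrite eq_sym.
have rl : r != l by rewrite eq_sym.
rewrite (cnt1 lb lrn br) (cnt1 rb rl bl).
rewrite -mulrDr natrM mulrAC mulrC; congr (_ * _).
have bl' : (b : nat) != l by [].
have br' : (b : nat) != r by [].
rewrite /w1 /btw; move: lr bl' br'.
case: (ltngtP (val l) (val b)) => h1; case: (ltngtP (val b) (val r)) => h2 /= lr' bl2 br2;
  rewrite ?mulr1n ?mulr0n; try lia; try lra.
by have := ltn_trans (ltn_trans h2 h1) (lr_lt' i); rewrite ltnn.
Qed.

End PerA.

Lemma exp_mono a b e : a <= b -> a ^ e <= b ^ e.
Proof. by move=> ab; elim: e => // e IH; rewrite !expnS leq_mul. Qed.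

Lemma ffact_lb a j : (a - j) ^ j <= a ^_ j.
Proof.
elim: j a => [|j IH] a; first by rewrite ffactn0 expn0.
rewrite ffactnS expnS; apply: leq_mul; first lia.
apply: leq_trans (IH a.-1); apply: exp_mono; lia.
Qed.

Lemma fact_le_exp j : j`! <= j ^ j.
Proof.
elim: j => // j IH; rewrite factS expnS leq_mul //.
apply: leq_trans IH _; apply: exp_mono; lia.
Qed.

Lemma main_nat n k : 2 <= k -> k <= n ->
  n ^ k <= (8 * (4 * k) ^ k) *
    (n./2 * (2 * 'C(n - 3, k - 2) * (n./2).-1 + k.+1 * 'C(n - 2, k - 2))).
Proof.
move=> hk kn.
have hm := odd_double_half n; rewrite -addnn in hm.
have m1 : 1 <= n./2 by case: (odd n) hm; lia.
have c2 : 1 <= 'C(n - 2, k - 2) by rewrite bin_gt0; lia.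
case: (ltnP n (4 * k)) => hn.
  apply: leq_trans (exp_mono k (ltnW hn)) _.
  have : 1 <= n./2 * (k.+1 * 'C(n - 2, k - 2)) by rewrite !muln_gt0; lia.
  set X := (4 * k) ^ k; set C3 := 'C(n - 3, k - 2); set C2 := 'C(n - 2, k - 2).
  set mm := n./2; move=> h.
  have : 1 <= mm * (2 * C3 * mm.-1 + k.+1 * C2).
    by apply: leq_trans h _; rewrite leq_mul2l leq_addl orbT.
  set P := mm * _; move=> hP; nia.
set c3 := 'C(n - 3, k - 2); set m := n./2.
have f1 : (n - 3 - (k - 2)) ^ (k - 2) <= c3 * (k - 2)`!.
  by rewrite bin_ffact; apply: ffact_lb.
have f2 : n ^ (k - 2) <= 2 ^ (k - 2) * (c3 * (k - 2)`!).
  apply: leq_trans (_ : n ^ (k - 2) <= (2 * (n - 3 - (k - 2))) ^ (k - 2)) _.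
    apply: exp_mono; lia.
  by rewrite expnMn leq_mul2l f1 orbT.
have f3 : n ^ 2 <= 16 * (m * m.-1).
  have : n <= 4 * m.-1 by rewrite /m; case: (odd n) hm; lia.
  have : n <= 4 * m by rewrite /m; case: (odd n) hm; lia.
  move=> a b; rewrite (_ : 16 * (m * m.-1) = (4 * m) * (4 * m.-1)); last ring.
  by rewrite expnS expn1 leq_mul.
have f4 : 2 ^ (k - 2) * (k - 2)`! <= (4 * k) ^ k.
  rewrite expnMn leq_mul //.
    apply: leq_trans (leq_pexp2l _ (leq_subr 2 k)) _ => //.
    by apply: exp_mono.
  apply: leq_trans (fact_le_exp _) _.
  apply: leq_trans (exp_mono _ (leq_subr 2 k)) _.
  apply: leq_pexp2l; lia.
have -> : n ^ k = n ^ 2 * n ^ (k - 2) by rewrite -expnD; congr (_ ^ _); lia.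
apply: leq_trans (leq_mul f3 f2) _.
apply: leq_trans (_ : 8 * (2 ^ (k - 2) * (k - 2)`!) * (m * (2 * c3 * m.-1)) <= _).
  rewrite (_ : 16 * (m * m.-1) * (2 ^ (k - 2) * (c3 * (k - 2)`!)) =
     8 * (2 ^ (k - 2) * (k - 2)`!) * (m * (2 * c3 * m.-1))); last ring.
  by [].
apply: leq_mul; first by rewrite leq_mul2l f4 orbT.
by rewrite leq_mul2l leq_addr orbT.
Qed.

Section Final.
Variable n : nat.
Local Notation m := (n./2).

Lemma btw_count (i : 'I_m) : m.-1 <= \sum_(b : 'I_n) btw i b.
Proof.
have -> : \sum_(b : 'I_n) btw i b = \sum_(b < n) ((i < b) && (b < i + m)) by [].
rewrite -(big_mkord xpredT (fun b => ((i < b) && (b < i + m)) : nat)).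
have h1 : i.+1 <= i + m by have := m2n n; have := ltn_ord i; lia.
have h2 : i + m <= n by have := lr_lt i; lia.
rewrite (big_cat_nat (n:=i.+1)) ?(leq_trans h1 h2) //=.
rewrite (big_cat_nat (n := i + m) h1 h2) /=.
apply: leq_trans (leq_addl _ _); apply: leq_trans (leq_addr _ _).
rewrite big_nat_cond (eq_bigr (fun _ => 1)); last first.
  by move=> b /andP[/andP[hb1 hb2] _]; rewrite hb1 hb2.
rewrite -big_nat_cond sum_nat_const_nat muln1; lia.
Qed.


Local Open Scope ring_scope.

Lemma CS (T : finType) (a b : T -> rat) : 0 < \sum_x b x ^+ 2 ->
  (\sum_x a x * b x) ^+ 2 <= (\sum_x a x ^+ 2) * (\sum_x b x ^+ 2).
Proof.
move=> Bpos.
have E (B C : rat) : \sum_x (B * a x - C * b x) ^+ 2 =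
   B ^+ 2 * (\sum_x a x ^+ 2) - 2 * B * C * (\sum_x a x * b x) + C ^+ 2 * (\sum_x b x ^+ 2).
  rewrite !mulr_sumr -sumrB -big_split /=; apply: eq_bigr => x _; ring.
set Bs := \sum_x b x ^+ 2; set C := \sum_x a x * b x; set As := \sum_x a x ^+ 2.
have H : 0 <= \sum_x (Bs * a x - C * b x) ^+ 2 by apply: sumr_ge0 => x _; apply: sqr_ge0.
rewrite E -/Bs -/C -/As in H.
have H2 : 0 <= Bs * (Bs * As - C ^+ 2).
  by rewrite (_ : Bs * (Bs * As - C ^+ 2) = Bs ^+ 2 * As - 2 * Bs * C * C + C ^+ 2 * Bs); first exact: H; ring.
rewrite pmulr_rge0 // subr_ge0 in H2.
by rewrite mulrC.
Qed.

Variable k : nat.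
Hypothesis hk : (2 <= k)%N.

Lemma X_sum (q : 'S_n) : Xn k q = \sum_(A : {set 'I_n} | #|A| == k) (incr A q)%:R.
Proof.
rewrite sum_card /Xn /occ; congr (_ %:R); apply: eq_card => A; by rewrite inE.
Qed.

Lemma sumXY : \sum_(q : 'S_n) Xn k q * Y q =
  \sum_(i < m) (\sum_(b : 'I_n) (2 * 'C(n - 3, k - 2))%:R * (btw i b)%:R
  + (k.+1 * 'C(n - 2, k - 2))%:R) * rho n k.
Proof.
transitivity (\sum_(q : 'S_n) \sum_(i < m) \sum_(A : {set 'I_n} | #|A| == k) (incr A q)%:R * sg i q).
  apply: eq_bigr => q _; rewrite X_sum /Y mulr_suml exchange_big /=.
  by apply: eq_bigr => i _; rewrite mulr_sumr.
rewrite exchange_big /=; apply: eq_bigr => i _.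
rewrite exchange_big /= -(sumG hk i) mulr_suml.
by apply: eq_bigr => A /eqP Ak; rewrite (h_G _ Ak).
Qed.


Lemma rho_ge0 : 0 <= rho n k.
Proof. by rewrite /rho divr_ge0 ?ler0n. Qed.

Lemma XY_lb : ((m * (2 * 'C(n - 3, k - 2) * m.-1 + k.+1 * 'C(n - 2, k - 2)))%N%:R : rat) * rho n k
  <= \sum_(q : 'S_n) Xn k q * Y q.
Proof.
rewrite sumXY -mulr_suml ler_wpM2r ?rho_ge0 //.
rewrite natrM.
set st := ((2 * 'C(n - 3, k - 2) * m.-1 + k.+1 * 'C(n - 2, k - 2))%N%:R : rat).
rewrite (_ : (m%:R : rat) * st = \sum_(i < m) st); last by rewrite sumr_const card_ord mulr_natl.
apply: ler_sum => i _; rewrite /st.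
rewrite natrD lerD2r -mulr_sumr -natr_sum -natrM ler_nat.
by rewrite leq_mul2l btw_count orbT.
Qed.

Lemma Var_lb : (0 < m)%N ->
  (\sum_(q : 'S_n) Xn k q * Y q) ^+ 2 / ((n`!)%:R ^+ 2 * m%:R) <= VarX k n.
Proof.
move=> m0.
set mu := Eunif (Xn k (n:=n)).
have hY : 0 < \sum_(q : 'S_n) Y q ^+ 2.
  by rewrite sum_Y2 mulr_gt0 // ltr0n // fact_gt0.
have := CS (fun q => Xn k q - mu) hY.
have -> : \sum_(q : 'S_n) (Xn k q - mu) * Y q = \sum_(q : 'S_n) Xn k q * Y q.
  under eq_bigr => q _ do rewrite mulrBl.
  by rewrite sumrB -mulr_sumr sum_Y mulr0 subr0.
rewrite sum_Y2 /VarX /Eunif -/mu.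
set P := \sum_q _; set S := \sum_q _ => H.
have N0 : 0 < (n`!)%:R :> rat by rewrite ltr0n fact_gt0.
have M0 : 0 < m%:R :> rat by rewrite ltr0n.
rewrite ler_pdivrMr ?mulr_gt0 ?exprn_gt0 //.
rewrite (_ : S / (n`!)%:R * ((n`!)%:R ^+ 2 * m%:R) = S * (m%:R * (n`!)%:R)) //.
field; by rewrite gt_eqF.
Qed.

End Final.

Lemma aux_field (M f K m : rat) : (f != 0)%R -> (m != 0)%R ->
  (M ^+ 2 / (f ^+ 2 * m) * (K * f) ^+ 2 = (M * K) ^+ 2 / m)%R.
Proof. by move=> f0 m0; field; rewrite f0 m0. Qed.

Unset Implicit Arguments.

Theorem proposition2p6 (k : nat) (hk : (2 <= k)%N) :
  exists c : rat, (0 < c)%R /\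
    forall n : nat, (k <= n)%N -> (c * (n%:R) ^+ (2 * k - 1) <= VarX k n)%R.
Proof.
set K := (8 * (4 * k) ^ k)%N; set F := ((k.+1)`!)%N.
have K0 : (0 < K)%N by rewrite /K muln_gt0 expn_gt0; lia.
have F0 : (0 < F)%N by rewrite fact_gt0.
exists (((K * F) ^ 2)%N%:R^-1)%R; split.
  by rewrite invr_gt0 ltr0n expn_gt0 muln_gt0 K0 F0.
move=> n kn.
set m := n./2.
have hm := odd_double_half n; rewrite -addnn in hm.
have m0 : (0 < m)%N by rewrite /m; case: (odd n) hm; lia.
have mn : (m <= n)%N by rewrite /m; case: (odd n) hm; lia.
set Mn := (m * (2 * 'C(n - 3, k - 2) * m.-1 + k.+1 * 'C(n - 2, k - 2)))%N.
have key := main_nat hk kn; rewrite -/m -/Mn -/K in key.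
have hXY := XY_lb n hk; rewrite -/m -/Mn in hXY.
have hV := Var_lb k m0.
set P := (\sum_q _)%R in hXY hV.
set N := ((n`!)%:R : rat) in hV.
have N0 : (0 < N)%R by rewrite ltr0n fact_gt0.
have rho0 := rho_ge0 n k.
have h1 : ((Mn%:R * rho n k) ^+ 2 <= P ^+ 2)%R.
  rewrite !expr2; apply: ler_pM => //; by rewrite mulr_ge0 ?ler0n.
apply: le_trans hV.
apply: le_trans (_ : (Mn%:R * rho n k) ^+ 2 / (N ^+ 2 * m%:R) <= _)%R; last first.
  by rewrite ler_wpM2r // invr_ge0 mulr_ge0 ?ler0n ?exprn_ge0 // ltW.
rewrite (_ : (Mn%:R * rho n k) ^+ 2 / (N ^+ 2 * m%:R) = Mn%:R ^+ 2 / (F%:R ^+ 2 * m%:R))%R; last first.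
  rewrite /rho -/N -/F; field.
  by rewrite !pnatr_eq0 -!lt0n m0 F0 fact_gt0.
have F0' : (0 < F%:R :> rat)%R by rewrite ltr0n.
have m0' : (0 < m%:R :> rat)%R by rewrite ltr0n.
rewrite mulrC -[X in (X * _)%R]natrX -(natrX _ _ 2).
rewrite ler_pdivrMr; last by rewrite ltr0n expn_gt0 muln_gt0 K0 F0.
rewrite (_ : ((Mn ^ 2)%N%:R / (F%:R ^+ 2 * m%:R) * ((K * F) ^ 2)%N%:R = ((Mn * K) ^ 2)%N%:R / m%:R)%R); last first.
  by rewrite !natrX (natrM _ K F) (natrM _ Mn K) aux_field // gt_eqF.
rewrite ler_pdivlMr // -natrM ler_nat.
apply: leq_trans (_ : n ^ (2 * k - 1) * n <= _)%N.
  by rewrite leq_mul2l mn orbT.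
rewrite -expnSr (_ : (2 * k - 1).+1 = k * 2)%N; last lia.
by rewrite expnM mulnC; apply: exp_mono.
Qed.
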